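(* For every integer $m\ge0$, the following identity of rational functions in indeterminates $x,y$ holds: $$\frac{1-x^{m+1}y^{m+1}}{(1-xy)(1-x)^m(1-y)^m}=\sum_{r=0}^{m}\sum_{s=0}^{m-r}\binom{m-r}{s}\binom{m-s}{r}\frac{x^ry^s}{(1-x)^{r+s}(1-y)^{r+s}}.$$ *)

(* Defs.v *)
From HB Require Import structures.
From mathcomp Require Import all_boot all_order all_algebra fraction.
Set Implicit Arguments. Unset Strict Implicit. Unset Printing Implicit Defensive.
Import GRing.Theory.
Local Open Scope ring_scope.

(* Bivariate polynomials over Q: {poly {poly rat}}; rational functions in x, y
   are its field of fractions. *)
Definition Qxy := {poly {poly rat}}.
Definition RatFun := {fraction Qxy}.

Definition xR : RatFun := tofrac ((('X : {poly rat})%:P) : Qxy).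
Definition yR : RatFun := tofrac ('X : Qxy).

(* Main.v *)
Require Import Defs.
From HB Require Import structures.
From mathcomp Require Import all_boot all_order all_algebra fraction.
Import GRing.Theory.
Local Open Scope ring_scope.
Set Warnings "-notation-overridden,-ambiguous-paths".
From mathcomp Require Import ring zify.

Section PS.
Local Set Implicit Arguments.
Variable F : fieldType.
Variable N : nat.

Definition cong (p q : {poly F}) := forall i, (i <= N)%N -> p`_i = q`_i.

Lemma cong_sym p q : cong p q -> cong q p.
Proof. by move=> h i hi; rewrite h. Qed.
Lemma cong_trans p q r : cong p q -> cong q r -> cong p r.
Proof. by move=> h1 h2 i hi; rewrite h1 // h2. Qed.
Lemma cong_mull c p q : cong p q -> cong (c * p) (c * q).
Proof.
move=> H i Hi; rewrite !coefM; apply: eq_bigr => j _; rewrite H //.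
exact: leq_trans (leq_subr _ _) Hi.
Qed.
Lemma cong_mul p p' q q' : cong p p' -> cong q q' -> cong (p*q) (p'*q').
Proof.
move=> Hp Hq; refine (cong_trans (cong_mull p Hq) _).
rewrite ![_ * q']mulrC; exact: cong_mull.
Qed.
Lemma cong_add p p' q q' : cong p p' -> cong q q' -> cong (p+q) (p'+q').
Proof. by move=> h1 h2 i hi; rewrite !coefD h1 // h2. Qed.
Lemma cong_sub p p' q q' : cong p p' -> cong q q' -> cong (p-q) (p'-q').
Proof. by move=> h1 h2 i hi; rewrite !coefB h1 // h2. Qed.
Lemma cong_sum a b (f g : nat -> {poly F}) :
  (forall j, cong (f j) (g j)) -> cong (\sum_(a <= j < b) f j) (\sum_(a <= j < b) g j).
Proof. by move=> h i hi; rewrite !coef_sum; apply: eq_bigr => j _; rewrite h. Qed.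
Lemma cong_X n p : (N < n)%N -> cong ('X^n * p) 0.
Proof. by move=> hn i hi; rewrite coefXnM coef0 (leq_ltn_trans hi hn). Qed.

Lemma shiftL (c : F) (f : nat -> F) (q : {poly F}) : q`_0 = f 0%N ->
  (forall i, (i < N)%N -> q`_i.+1 = f i.+1 - c * f i) ->
  cong ((1 - c%:P * 'X) * \poly_(i < N.+1) f i) q.
Proof.
move=> h0 hS [|i] Hi; rewrite mulrBl mul1r -mulrA coefB coefCM coefXM !coef_poly /=.
  by rewrite mulr0 subr0 h0.
by rewrite hS // ltnS Hi ltnS (ltnW Hi).
Qed.

Variables x y : F.
Definition A (z : F) (j : nat) := \poly_(i < N.+1) ('C(i + j, i)%:R * z ^+ i).

Lemma A0 z : cong ((1 - z%:P * 'X) * A z 0) 1.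
Proof.
apply: shiftL; first by rewrite coef1 addn0 binn mul1r expr0.
by move=> i _; rewrite coef1 /= !addn0 !binn !mul1r exprS subrr.
Qed.

Lemma AS z j : cong ((1 - z%:P * 'X) * A z j.+1) (A z j).
Proof.
apply: shiftL; first by rewrite coef_poly /= !bin0 !expr0.
move=> i hi; rewrite coef_poly ltnS hi.
rewrite !addSn !addnS (binS (i + j).+1 i) natrD exprS; ring.
Qed.

Definition P := (1 - x%:P * 'X) * (1 - y%:P * 'X).
Definition AB j := A x j * A y j.

Lemma PAB j : cong (P * AB j.+1) (AB j).
Proof.
have -> : P * AB j.+1 = ((1 - x%:P * 'X) * A x j.+1) * ((1 - y%:P * 'X) * A y j.+1).
  by rewrite /P /AB; ring.
exact: cong_mul (AS _ _) (AS _ _).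
Qed.
Lemma PAB0 : cong (P * AB 0) 1.
Proof.
have -> : P * AB 0 = ((1 - x%:P * 'X) * A x 0) * ((1 - y%:P * 'X) * A y 0).
  by rewrite /P /AB; ring.
by have := cong_mul (A0 x) (A0 y); rewrite mulr1.
Qed.

Definition w := (1 - x) * (1 - y).
Definition W := w%:P * 'X.
Definition H := \sum_(0 <= j < N.+1) W ^+ j * AB j.

Lemma WX k : W ^+ k = (w ^+ k)%:P * 'X^k.
Proof. by rewrite /W exprMn rmorphXn. Qed.

Lemma Hmain : cong ((P - W) * H) 1.
Proof.
set S' := \sum_(0 <= k < N) W ^+ k.+1 * AB k.
have h1 : cong (P * H) (1 + S').
  rewrite /H mulr_sumr big_nat_recl //.
  apply: cong_add; first by rewrite expr0 mul1r; exact: PAB0.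
  apply: cong_sum => k.
  have -> : P * (W ^+ k.+1 * AB k.+1) = W ^+ k.+1 * (P * AB k.+1) by ring.
  exact: cong_mull (PAB k).
have h2 : cong (W * H) (S' + 0).
  rewrite /H mulr_sumr big_nat_recr //=.
  apply: cong_add; first by apply: cong_sum => k; rewrite mulrA -exprS; exact: cong_sym.
  rewrite mulrA -exprS WX -mulrA -(mulr0 (w ^+ N.+1)%:P).
  apply: cong_mull; exact: cong_X.
rewrite mulrBl; refine (cong_trans (cong_sub h1 h2) _).
by rewrite addr0 addrK.
Qed.

Definition Q := (1 - 1%:P * 'X) * (1 - (x * y)%:P * 'X).
Lemma PWQ : P - W = Q.
Proof. rewrite /P /W /Q /w !rmorphM !rmorphB /= !polyC1; ring. Qed.

Definition T := \poly_(i < N.+1) (1 : F).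
Definition G := \poly_(i < N.+1) ((x * y) ^+ i).

Lemma QTG : cong (Q * (T * G)) 1.
Proof.
have -> : Q * (T * G) = ((1 - 1%:P * 'X) * T) * ((1 - (x * y)%:P * 'X) * G).
  by rewrite /Q; ring.
have h1 : cong ((1 - 1%:P * 'X) * T) 1.
  apply: shiftL; first by rewrite coef1.
  by move=> i _; rewrite coef1 mul1r subrr.
have h2 : cong ((1 - (x * y)%:P * 'X) * G) 1.
  apply: shiftL; first by rewrite coef1 expr0.
  by move=> i _; rewrite coef1 exprS subrr.
by have := cong_mul h1 h2; rewrite mulr1.
Qed.

Lemma HTG : cong H (T * G).
Proof.
have e : cong H (H * (Q * (T * G))).
  by have := cong_mull H (cong_sym QTG); rewrite mulr1.
refine (cong_trans e _).
rewrite mulrA [H * Q]mulrC -PWQ.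
have := cong_mul Hmain (fun i _ => erefl ((T * G)`_i)).
by rewrite mul1r.
Qed.


Lemma coefH : H`_N = \sum_(0 <= j < N.+1) w ^+ j *
   \sum_(0 <= r < (N - j).+1) (('C(r + j, r)%:R * x ^+ r) *
        ('C(N - j - r + j, N - j - r)%:R * y ^+ (N - j - r))).
Proof.
rewrite /H coef_sum; apply: eq_big_nat => j /andP[_ hj].
rewrite WX -mulrA coefCM coefXnM ltnNge -ltnS hj /= coefM big_mkord.
congr (_ * _); apply: eq_bigr => k _; rewrite !coef_poly.
have hk : (k < N.+1)%N by rewrite ltnS (leq_trans _ (leq_subr j N)) // -ltnS.
by rewrite hk ltnS (leq_trans (leq_subr _ _) (leq_subr _ _)).
Qed.

Lemma coefTG : (T * G)`_N = \sum_(0 <= k < N.+1) (x * y) ^+ k.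
Proof.
rewrite coefMr big_mkord; apply: eq_bigr => k _.
by rewrite !coef_poly ltn_ord ltnS leq_subr mul1r.
Qed.

Lemma tri n (f : nat -> nat -> F) :
  \sum_(0 <= r < n.+1) \sum_(0 <= j < (n - r).+1) f r j =
  \sum_(0 <= j < n.+1) \sum_(0 <= r < (n - j).+1) f r j.
Proof.
have E : forall g : nat -> nat -> F,
   \sum_(0 <= r < n.+1) \sum_(0 <= j < (n - r).+1) g r j =
   \sum_(0 <= r < n.+1) \sum_(0 <= j < n.+1) (if (r + j <= n)%N then g r j else 0).
  move=> g; apply: eq_big_nat => r /andP[_ hr].
  rewrite (@big_nat_widen _ _ _ _ _ n.+1); last by rewrite ltnS leq_subr.
  rewrite big_mkcond; apply: eq_bigr => j _ /=; rewrite ltnS leq_subRL // -ltnS.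
rewrite E exchange_big_nat (E (fun a b => f b a)).
by apply: eq_big_nat => j _; apply: eq_bigr => r _; rewrite addnC.
Qed.

Lemma Kid : \sum_(0 <= r < N.+1) \sum_(0 <= s < (N - r).+1)
   ('C(N - r, s) * 'C(N - s, r))%:R * (x ^+ r * y ^+ s) * w ^+ (N - r - s)
   = \sum_(0 <= k < N.+1) (x * y) ^+ k.
Proof.
rewrite -coefTG -HTG // coefH.
transitivity (\sum_(0 <= r < N.+1) \sum_(0 <= j < (N - r).+1)
   w ^+ j * (('C(r + j, r)%:R * x ^+ r) *
        ('C(N - j - r + j, N - j - r)%:R * y ^+ (N - j - r)))); last first.
  by rewrite tri; apply: eq_big_nat => j _; rewrite mulr_sumr.
apply: eq_big_nat => r /andP[_ hr]; rewrite big_nat_rev.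
apply: eq_big_nat => j /andP[_ hj]; rewrite add0n subSS.
rewrite ltnS in hr hj.
have e1 : (N - (N - r - j) = r + j)%N by lia.
have e2 : (N - r - (N - r - j) = j)%N by lia.
have e3 : (N - j - r = N - r - j)%N by lia.
have e4 : (N - r - j + j = N - r)%N by lia.
rewrite e1 e2 e3 e4 natrM bin_sub //; ring.
Qed.

End PS.


Lemma nzx : 1 - xR != 0.
Proof.
rewrite /xR -tofrac1 -tofracB tofrac_eq0; apply/eqP => h.
have : ((1 - ('X)%:P : Qxy)`_0)`_1 = ((0 : Qxy)`_0)`_1 by rewrite h.
rewrite coefB coef0 coef1 coefC eqxx coef0 coefB coef1 coefX.
by rewrite sub0r => /eqP; rewrite oppr_eq0 oner_eq0.
Qed.
Lemma nzy : 1 - yR != 0.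
Proof.
rewrite /yR -tofrac1 -tofracB tofrac_eq0; apply/eqP => h.
have : ((1 - 'X : Qxy)`_1) = ((0 : Qxy)`_1) by rewrite h.
rewrite coefB coef0 coef1 coefX.
by rewrite sub0r => /eqP; rewrite oppr_eq0 oner_eq0.
Qed.
Lemma nzxy : 1 - xR * yR != 0.
Proof.
rewrite /xR /yR -tofracM -tofrac1 -tofracB tofrac_eq0; apply/eqP => h.
have : ((1 - ('X)%:P * 'X : Qxy)`_1)`_1 = ((0 : Qxy)`_1)`_1 by rewrite h.
rewrite coefB coef0 coef1 coefCM coefX eqxx mulr1 coef0 (_ : (1 == 0)%:R = 0 :> {poly rat}) // coefB coef0 coefX.
by rewrite sub0r => /eqP; rewrite oppr_eq0 oner_eq0.
Qed.

Lemma divMr (F : fieldType) (a b c : F) : c != 0 -> a / b = a * c / (b * c).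
Proof.
move=> hc; rewrite invfM [b^-1 * c^-1]mulrC mulrA -(mulrA a c) mulfV; last exact: hc.
by rewrite mulr1.
Qed.

Lemma geo (F : fieldType) (a : F) n :
  1 - a ^+ n.+1 = (1 - a) * \sum_(0 <= k < n.+1) a ^+ k.
Proof.
elim: n => [|n IH]; first by rewrite big_nat1 expr1 expr0 mulr1.
by rewrite big_nat_recr //= mulrDr -IH mulrBl mul1r -exprS addrA subrK.
Qed.

Theorem theorem2p4 (m : nat) :
  (1 - xR ^+ m.+1 * yR ^+ m.+1) /
    ((1 - xR * yR) * (1 - xR) ^+ m * (1 - yR) ^+ m)
  = \sum_(0 <= r < m.+1) \sum_(0 <= s < (m - r).+1)
      ('C(m - r, s) * 'C(m - s, r))%:R * (xR ^+ r * yR ^+ s)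
        / ((1 - xR) ^+ (r + s) * (1 - yR) ^+ (r + s)).
Proof.
have K := @Kid RatFun m xR yR; rewrite /w in K.
set ww := (1 - xR) * (1 - yR) in K.
have hw : ww != 0 by exact: mulf_neq0 nzx nzy.
transitivity ((\sum_(0 <= r < m.+1) \sum_(0 <= s < (m - r).+1)
   ('C(m - r, s) * 'C(m - s, r))%:R * (xR ^+ r * yR ^+ s) * ww ^+ (m - r - s)) / ww ^+ m); last first.
  rewrite mulr_suml; apply: eq_big_nat => r /andP[_ hr].
  rewrite mulr_suml; apply: eq_big_nat => s /andP[_ hs].
  rewrite ltnS in hr; rewrite ltnS in hs.
  have e : ww ^+ m = ((1 - xR) ^+ (r + s) * (1 - yR) ^+ (r + s)) * ww ^+ (m - r - s).
    have em : (r + s + (m - r - s) = m)%N by move: hr hs; clear; move=> hr hs; lia.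
    by rewrite -exprMn -/ww -exprD em.
  by rewrite e [RHS](@divMr _ _ _ _ (expf_neq0 (m - r - s) hw)).
rewrite K -exprMn geo -mulrA -exprMn -/ww invfM mulrACA mulfV; last exact: nzxy.
by rewrite mul1r.
Qed.
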